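(* Consider an instance of the constructive \$-protection problem (all voter weights equal to 1) and let $\mathcal{V}_F\subseteq\mathcal{V}$ be the set of awarded voters. Suppose the attacker can make the designated candidate $c^\star$ win (obtain a total score strictly higher than every other candidate) by bribing a set $\mathcal{V}_B\subseteq\mathcal{V}\setminus\mathcal{V}_F$ with $\sum_{v_j\in\mathcal{V}_B}p_j^b\le B$. If $v_{j'}\prec v_j$, $v_{j'}\in\mathcal{V}_B$ and $v_j\notin\mathcal{V}_F\cup\mathcal{V}_B$, then the attacker can also make $c^\star$ win by bribing $(\mathcal{V}_B\setminus\{v_{j'}\})\cup\{v_j\}$ (within budget $B$).
   Context: Election model. Candidates $\mathcal{C}=\{c_1,\dots,c_m\}$, voters $\mathcal{V}=\{v_1,\dots,v_n\}$; voter $v_j$ has a preference list $\tau_j$ (a linear order of $\mathcal{C}$), weight $w_j$, awarding price $p_j^a\in\mathbb{Z}_{>0}$, bribing price $p_j^b\in\mathbb{Z}_{>0}$. A scoring rule $\alpha=(\alpha_1\ge\cdots\ge\alpha_m)$ of nonnegative integers gives the candidate at position $z$ of $v_j$'s list $w_j\alpha_z$ points; total score is the sum over voters. In the constructive \$-protection problem all $w_j=1$, there is a designated candidate $c^\star$, a defense budget $F$ and an attack budget $B$; the attacker may choose $\mathcal{V}_B\subseteq\mathcal{V}\setminus\mathcal{V}_F$ with total bribing price at most $B$ and replace each list in $\mathcal{V}_B$ by an arbitrary list. Dominance: $v_{j'}\prec v_j$ if either (i) $\tau_j=\tau_{j'}$, $w_j\ge w_{j'}$, $p_j^a\le p_{j'}^a$,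 $p_j^b\le p_{j'}^b$ with at least one of these three inequalities strict; or (ii) $\tau_j=\tau_{j'}$, $w_j=w_{j'}$, $p_j^a=p_{j'}^a$, $p_j^b=p_{j'}^b$ and $j'<j$. *)

(* Defs.v *)
From mathcomp Require Import all_boot all_order all_fingroup.
Set Implicit Arguments. Unset Strict Implicit. Unset Printing Implicit Defensive.

(* Candidates are 'I_m, voters are 'I_n.  A preference list is a permutation
   tau : {perm 'I_m}; tau z is the candidate at position z (0-indexed). *)

Definition profile (m n : nat) := 'I_n -> {perm 'I_m}.

Definition score (m n : nat) (alpha : 'I_m -> nat) (w : 'I_n -> nat)
  (tau : profile m n) (c : 'I_m) : nat :=
  \sum_(j < n) \sum_(z < m) (if tau j z == c then w j * alpha z else 0).

Definition bribed (m n : nat) (tau : profile m n) (VB : {set 'I_n})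
  (tau' : profile m n) : profile m n :=
  fun j => if j \in VB then tau' j else tau j.

Definition wins (m n : nat) (alpha : 'I_m -> nat) (w : 'I_n -> nat)
  (tau : profile m n) (cstar : 'I_m) : Prop :=
  forall c : 'I_m, c != cstar -> score alpha w tau c < score alpha w tau cstar.

Definition attack_succeeds (m n : nat) (alpha : 'I_m -> nat) (w : 'I_n -> nat)
  (pb : 'I_n -> nat) (B : nat) (tau : profile m n) (cstar : 'I_m)
  (VF VB : {set 'I_n}) : Prop :=
  [/\ [disjoint VB & VF],
      \sum_(j in VB) pb j <= B
    & exists tau' : profile m n, wins alpha w (bribed tau VB tau') cstar].

(* Dominance: dominated j' j  means  v_{j'} \prec v_j. *)
Definition dominated (m n : nat) (tau : profile m n) (w pa pb : 'I_n -> nat)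
  (j' j : 'I_n) : Prop :=
  (tau j = tau j' /\ w j' <= w j /\ pa j <= pa j' /\ pb j <= pb j' /\
     (w j' < w j \/ pa j < pa j' \/ pb j < pb j'))
  \/
  (tau j = tau j' /\ w j = w j' /\ pa j = pa j' /\ pb j = pb j' /\
     (j' < j)%N).

(* Main.v *)
Require Import Defs.
From mathcomp Require Import all_boot all_order all_fingroup.

Lemma score_swap (m n : nat) (alpha : 'I_m -> nat) (w : 'I_n -> nat)
  (Hw : forall j, w j = 1%N) (P P' : profile m n) (a b : 'I_n) c :
  (forall k, P' k = P (tperm a b k)) ->
  score alpha w P' c = score alpha w P c.
Proof.
move=> HP.
rewrite /score (reindex_inj (@perm_inj _ (tperm a b))) /=.
apply: eq_bigr => k _; rewrite HP tpermK; apply: eq_bigr => z _.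
by rewrite !Hw.
Qed.

Theorem lemma7 (m n : nat) (alpha : 'I_m -> nat)
  (Halpha : forall z1 z2 : 'I_m, (z1 <= z2)%N -> (alpha z2 <= alpha z1)%N)
  (tau : 'I_n -> {perm 'I_m}) (w pa pb : 'I_n -> nat)
  (Hw : forall j, w j = 1%N)
  (Hpa : forall j, (0 < pa j)%N) (Hpb : forall j, (0 < pb j)%N)
  (cstar : 'I_m) (F B : nat) (VF VB : {set 'I_n})
  (HVF : (\sum_(j in VF) pa j <= F)%N)
  (j j' : 'I_n) :
  attack_succeeds alpha w pb B tau cstar VF VB ->
  dominated tau w pa pb j' j ->
  j' \in VB -> j \notin VF :|: VB ->
  attack_succeeds alpha w pb B tau cstar VF (j |: (VB :\ j')).
Proof.
move=> [Hdis Hbud [tau' Hwin]] Hdom Hj' Hj.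
have [Htau Hpbj] : tau j = tau j' /\ pb j <= pb j'.
  by case: Hdom => [[? [? [? [? ?]]]]|[? [? [? [-> ?]]]]].
move: Hj; rewrite in_setU negb_or => /andP [HjF HjB].
have Hne : j != j' by apply/eqP => E; rewrite E Hj' in HjB.
split.
- rewrite -setI_eq0; apply/eqP/setP => k; rewrite !inE.
  case: eqP => [->|_] /=; first by rewrite (negbTE HjF).
  have := Hdis; rewrite -setI_eq0 => /eqP /setP /(_ k); rewrite !inE => H.
  by rewrite -andbA H andbF.
- rewrite big_setU1 /=; last by rewrite !inE negb_and HjB orbT.
  rewrite (bigD1 j') /= in Hbud; last by [].
  apply: leq_trans Hbud.
  apply: leq_add => //.
  apply: eq_leq; apply: eq_bigl => k; rewrite !inE; by rewrite andbC.
- exists (fun k => if k == j then tau' j' else tau' k).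
  move=> c Hc.
  have E : forall k, bribed tau (j |: (VB :\ j')) (fun k => if k == j then tau' j' else tau' k) k
        = bribed tau VB tau' (tperm j j' k).
    move=> k.
    rewrite /bribed !inE.
    case: (tpermP j j' k) => [->|->|/eqP Hkj /eqP Hkj'].
    + by rewrite eqxx /= Hj'.
    + by rewrite eq_sym (negbTE Hne) eqxx /= (negbTE HjB) Htau.
    + by rewrite (negbTE Hkj) (negbTE Hkj') /=.
  rewrite (@score_swap m n alpha w Hw _ _ _ _ _ E) (@score_swap m n alpha w Hw _ _ _ _ _ E); exact: Hwin.
Qed.
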